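(* Let $X$ and $Y$ be infinite sets with $|X| < |Y|$. Then: (i) every sequence of words that is universal for $I(X)$ is universal for $I(Y)$; (ii) if $2^{\aleph_0} < |X|$, then every sequence of words that is universal for $I(Y)$ is universal for $I(X)$. In particular, if $2^{\aleph_0} < |X| \leq |Y|$, then the sequences universal for $I(X)$ are exactly the sequences universal for $I(Y)$.
   Context: $I(X)$ denotes the symmetric inverse monoid on $X$: all partial permutations of $X$ (bijections between subsets of $X$) under composition of binary relations. For an alphabet $A$ (a finite or countable set), $A^+$ is the free semigroup of non-empty words over $A$. A sequence $w_1, w_2, \ldots \in A^+$ is universal for a semigroup $S$ if for every sequence $s_1, s_2, \ldots \in S$ there is a semigroup homomorphism $\phi: A^+ \to S$ with $(w_n)\phi = s_n$ for all $n \geq 1$. *)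

(* Defs.v *)
From Stdlib Require Import List.
Import ListNotations.

Definition injective {A B : Type} (f : A -> B) : Prop :=
  forall a a', f a = f a' -> a = a'.
Definition card_le (A B : Type) : Prop := exists f : A -> B, injective f.
Definition card_lt (A B : Type) : Prop := card_le A B /\ ~ card_le B A.
Definition infinite (X : Type) : Prop := card_le nat X.
(* finite or countable *)
Definition countable (A : Type) : Prop := card_le A nat.

(* Binary relations on X; I(X) = partial bijections of X. *)
Definition rel (X : Type) := X -> X -> Prop.
Definition partial_perm {X : Type} (R : rel X) : Prop :=
  (forall x y y', R x y -> R x y' -> y = y') /\
  (forall x x' y, R x y -> R x' y -> x = x').
(* composition of binary relations: first R, then S *)
Definition rcomp {X : Type} (R S : rel X) : rel X :=
  fun x z => exists y, R x y /\ S y z.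
Definition rel_eq {X : Type} (R S : rel X) : Prop :=
  forall x y, R x y <-> S x y.

(* A^+ : non-empty words a :: l *)
Definition word (A : Type) := (A * list A)%type.

(* image of a word under the homomorphism A^+ -> I(X) extending f *)
Definition eval_word {X A : Type} (f : A -> rel X) (w : word A) : rel X :=
  fold_left (fun R b => rcomp R (f b)) (snd w) (f (fst w)).

Definition universal (X A : Type) (w : nat -> word A) : Prop :=
  forall s : nat -> rel X, (forall n, partial_perm (s n)) ->
  exists f : A -> rel X, (forall a, partial_perm (f a)) /\
    forall n, rel_eq (eval_word f (w n)) (s n).

(* Main.v *)
Require Import Defs.
From Stdlib Require Import Arith Relations Classical ClassicalEpsilon FunctionalExtensionality PropExtensionality ProofIrrelevance Cantor List Lia.
From mathcomp Require classical_sets.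
Module ZW.
Import mathcomp.boot.ssreflect mathcomp.boot.ssrfun mathcomp.boot.ssrbool mathcomp.classical.boolp mathcomp.classical.classical_sets.
Local Open Scope classical_set_scope.
Lemma myzorn (T : Type) (P : (T -> Prop) -> Prop) :
  (forall F : (T -> Prop) -> Prop, (forall X, F X -> P X) ->
     (forall X Y, F X -> F Y -> (forall t, X t -> Y t) \/ (forall t, Y t -> X t)) ->
     P (fun t => exists X, F X /\ X t)) ->
  exists M, P M /\ forall B, (forall t, M t -> B t) -> P B -> forall t, B t -> M t.
Proof.
move=> H.
have [M [PM Mmax]] : exists A, P A /\ forall B, A `<` B -> ~ P B.
  apply: Zorn_bigcup => F FP Ftot.
  have -> : \bigcup_(X in F) X = (fun t => exists X, F X /\ X t).
    by apply/funext=> t; apply/propext; split=> [[X FX Xt]|[X [FX Xt]]]; exists X.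
  apply: H => // X Y FX FY; exact: Ftot.
exists M; split => // B MB PB t Bt.
apply: NNPP => Mt.
apply: (Mmax B) => //; split => // BM; exact: Mt (BM t Bt).
Qed.
End ZW.

Definition surj {A B} (f : A -> B) := forall b, exists a, f a = b.
Definition cid {T} {P : T -> Prop} (H : exists x, P x) : {x | P x} :=
  constructive_indefinite_description P H.
Definition dec (P : Prop) : {P} + {~P} := excluded_middle_informative P.

Lemma cle_refl A : card_le A A.
Proof. exists (fun x => x). intros a b h; exact h. Qed.

Lemma cle_trans A B C : card_le A B -> card_le B C -> card_le A C.
Proof.
intros [f Hf] [g Hg]. exists (fun x => g (f x)). intros a a' h. apply Hf, Hg, h.
Qed.

Lemma cle_prod A A' B B' : card_le A A' -> card_le B B' -> card_le (A*B) (A'*B').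
Proof.
intros [f Hf] [g Hg]. exists (fun p => (f (fst p), g (snd p))).
intros [a b] [a' b'] h. simpl in h. injection h; intros h2 h1.
rewrite (Hf _ _ h1), (Hg _ _ h2). reflexivity.
Qed.

Lemma cle_sum A A' B B' : card_le A A' -> card_le B B' -> card_le (A+B) (A'+B').
Proof.
intros [f Hf] [g Hg]. exists (fun p => match p with inl a => inl (f a) | inr b => inr (g b) end).
intros [a|b] [a'|b'] h; try discriminate; injection h; intro h1.
rewrite (Hf _ _ h1); reflexivity. rewrite (Hg _ _ h1); reflexivity.
Qed.

Lemma cle_assoc A B C : card_le ((A*B)*C) (A*(B*C)).
Proof.
exists (fun p => (fst (fst p), (snd (fst p), snd p))).
intros [[a b] c] [[a' b'] c'] h. simpl in h. injection h; intros; subst; reflexivity.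
Qed.

Lemma cle_natnat : card_le (nat*nat) nat.
Proof.
exists Cantor.to_nat. intros a b h.
rewrite <- (Cantor.cancel_of_to a); rewrite <- (Cantor.cancel_of_to b); rewrite h. reflexivity.
Qed.

Lemma cle_sum_prod A : card_le (A + A) (A * nat).
Proof.
exists (fun p => match p with inl a => (a,0) | inr a => (a,1) end).
intros [a|a] [a'|a'] h; injection h; intros; subst; try discriminate; reflexivity.
Qed.

Lemma cle_sig {T} (P : T -> Prop) : card_le {x | P x} T.
Proof.
exists (@proj1_sig _ _). intros [a pa] [b pb] h. simpl in h. subst.
rewrite (proof_irrelevance _ pa pb). reflexivity.
Qed.

Lemma sig_eq {T} (P : T -> Prop) (a b : {x | P x}) : proj1_sig a = proj1_sig b -> a = b.
Proof.
destruct a as [a pa], b as [b pb]. simpl. intro h. subst.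
rewrite (proof_irrelevance _ pa pb). reflexivity.
Qed.

Fixpoint SBC {A B} (f : A -> B) (g : B -> A) (n : nat) (a : A) : Prop :=
  match n with
  | 0 => ~ exists b, g b = a
  | S n => exists a', SBC f g n a' /\ g (f a') = a
  end.

Lemma SB_aux {A B} (f : A -> B) (g : B -> A) a :
  ~ (exists n, SBC f g n a) -> exists b, g b = a.
Proof.
intro h. apply NNPP. intro h2. apply h. exists 0. exact h2.
Qed.

Lemma SB A B : card_le A B -> card_le B A -> exists h : A -> B, injective h /\ surj h.
Proof.
intros [f Hf] [g Hg].
set (h := fun a => match dec (exists n, SBC f g n a) with
                   | left _ => f a
                   | right H => proj1_sig (cid (SB_aux f g a H)) end).
exists h. split.
- intros a1 a2. unfold h.
  destruct (dec (exists n, SBC f g n a1)) as [C1|C1];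
  destruct (dec (exists n, SBC f g n a2)) as [C2|C2].
  + apply Hf.
  + destruct (cid (SB_aux f g a2 C2)) as [b2 e2]. simpl. intro e.
    exfalso. apply C2. destruct C1 as [n C1]. exists (S n). exists a1. subst. split; auto.
  + destruct (cid (SB_aux f g a1 C1)) as [b1 e1]. simpl. intro e.
    exfalso. apply C1. destruct C2 as [n C2]. exists (S n). exists a2. subst. split; auto.
  + destruct (cid (SB_aux f g a1 C1)) as [b1 e1].
    destruct (cid (SB_aux f g a2 C2)) as [b2 e2]. simpl. intro e. subst. reflexivity.
- intro b. destruct (dec (exists n, SBC f g n (g b))) as [C|C].
  + destruct C as [[|n] C].
    * exfalso. apply C. exists b. reflexivity.
    * destruct C as [a' [C e]]. apply Hg in e. exists a'. unfold h.
      destruct (dec (exists n, SBC f g n a')) as [C'|C']. exact e.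
      exfalso. apply C'. exists n. exact C.
  + exists (g b). unfold h. destruct (dec (exists n, SBC f g n (g b))) as [C'|C'].
    contradiction.
    destruct (cid (SB_aux f g (g b) C')) as [b' e']. simpl. apply Hg. exact e'.
Qed.

Lemma surj_inv {A B} (h : A -> B) : injective h -> surj h -> card_le B A.
Proof.
intros Hi Hs. exists (fun b => proj1_sig (cid (Hs b))).
intros b b' e. destruct (cid (Hs b)) as [a ea]. destruct (cid (Hs b')) as [a' ea'].
simpl in e. subst. reflexivity.
Qed.

Lemma choice_fun {A B} (R : A -> B -> Prop) : (forall a, exists b, R a b) ->
  exists f : A -> B, forall a, R a (f a).
Proof.
intro H. exists (fun a => proj1_sig (cid (H a))). intro a. exact (proj2_sig (cid (H a))).
Qed.

Definition pbij {A B} (r : A * B -> Prop) :=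
  (forall a b b', r (a,b) -> r (a,b') -> b = b') /\
  (forall a a' b, r (a,b) -> r (a',b) -> a = a').

Lemma pbij_union {A B} (F : (A*B -> Prop) -> Prop) :
  (forall X, F X -> pbij X) ->
  (forall X Y, F X -> F Y -> (forall t, X t -> Y t) \/ (forall t, Y t -> X t)) ->
  pbij (fun t => exists X, F X /\ X t).
Proof.
intros HF Htot. split.
- intros a b b' [X [FX Xt]] [Y [FY Yt]].
  destruct (Htot X Y FX FY) as [h|h].
  + apply (proj1 (HF Y FY) a); auto.
  + apply (proj1 (HF X FX) a); auto.
- intros a a' b [X [FX Xt]] [Y [FY Yt]].
  destruct (Htot X Y FX FY) as [h|h].
  + apply (proj2 (HF Y FY) _ _ b); auto.
  + apply (proj2 (HF X FX) _ _ b); auto.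
Qed.

Lemma comparability A B : card_le A B \/ card_le B A.
Proof.
destruct (ZW.myzorn (A*B) pbij (fun F h1 h2 => pbij_union F h1 h2)) as [M [PM Mmax]].
destruct (classic (forall a, exists b, M (a,b))) as [HA|HA].
- left. destruct (choice_fun _ HA) as [f Hf]. exists f.
  intros a a' e. apply (proj2 PM a a' (f a)); auto. rewrite e; auto.
- destruct (classic (forall b, exists a, M (a,b))) as [HB|HB].
  + right. destruct (choice_fun _ HB) as [f Hf]. exists f.
    intros b b' e. apply (proj1 PM (f b) b b'); auto. rewrite e; auto.
  + exfalso. apply not_all_ex_not in HA. apply not_all_ex_not in HB.
    destruct HA as [a0 Ha0]. destruct HB as [b0 Hb0].
    set (M' := fun t => M t \/ t = (a0,b0)).
    assert (PM' : pbij M').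
    { split.
      - intros a b b' [h|h] [h'|h'].
        + apply (proj1 PM a); auto.
        + injection h'; intros; subst. exfalso; apply Ha0; exists b; auto.
        + injection h; intros; subst. exfalso; apply Ha0; exists b'; auto.
        + injection h; injection h'; intros; subst; auto.
      - intros a a' b [h|h] [h'|h'].
        + apply (proj2 PM a a' b); auto.
        + injection h'; intros; subst. exfalso; apply Hb0; exists a; auto.
        + injection h; intros; subst. exfalso; apply Hb0; exists a'; auto.
        + injection h; injection h'; intros; subst; auto. }
    assert (HM := Mmax M' (fun t h => or_introl h) PM' (a0,b0) (or_intror eq_refl)).
    apply Ha0. exists b0. exact HM.
Qed.

Lemma cle_rel {A B} (R : A -> B -> Prop) :
  (forall a, exists b, R a b) -> (forall a a' b, R a b -> R a' b -> a = a') -> card_le A B.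
Proof.
intros H1 H2. destruct (choice_fun _ H1) as [f Hf]. exists f.
intros a a' E. apply (H2 a a' (f a)); auto. rewrite E; auto.
Qed.

Lemma inf_mul Z : card_le nat Z -> card_le (Z * nat) Z.
Proof.
intros [e He].
set (P := fun r : (Z*nat)*Z -> Prop => pbij r /\
   forall z n m y, r ((z,n),y) -> exists y', r ((z,m),y')).
destruct (ZW.myzorn _ P) as [M [[PM DM] Mmax]].
{ intros F HF Htot. split.
  - apply pbij_union; [intros X FX; exact (proj1 (HF X FX)) | exact Htot].
  - intros z n m y [X [FX Xt]]. destruct (proj2 (HF X FX) z n m y Xt) as [y' H].
    exists y'. exists X. auto. }
destruct (classic (forall z, exists y, M ((z,0),y))) as [HD|HD].
- apply (cle_rel (fun p y => M (p,y))).
  + intros [z n]. destruct (HD z) as [y Hy]. apply (DM z 0 n y Hy).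
  + intros p p' y h h'. apply (proj2 PM p p' y); auto.
- apply not_all_ex_not in HD. destruct HD as [z0 Hz0].
  set (R := fun y => ~ exists p, M (p,y)).
  destruct (classic (card_le nat {y | R y})) as [HR|HR].
  + exfalso. destruct HR as [e' He'].
    set (M' := fun t => M t \/ exists n, t = ((z0,n), proj1_sig (e' n))).
    assert (PM' : P M').
    { split; [split|].
      - intros a b b' [h|[n h]] [h'|[n' h']].
        + apply (proj1 PM a); auto.
        + injection h'; intros; subst. exfalso. apply Hz0.
          destruct (DM _ _ 0 _ h) as [y0 Hy0]. exists y0; exact Hy0.
        + injection h; intros; subst. exfalso. apply Hz0.
          destruct (DM _ _ 0 _ h') as [y0 Hy0]. exists y0; exact Hy0.
        + injection h; injection h'; intros; subst.
          injection H2; intros; subst. reflexivity.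
      - intros a a' b [h|[n h]] [h'|[n' h']].
        + apply (proj2 PM a a' b); auto.
        + injection h'; intros; subst. exfalso.
          apply (proj2_sig (e' n')). exists a; exact h.
        + injection h; intros; subst. exfalso.
          apply (proj2_sig (e' n)). exists a'; exact h'.
        + injection h; injection h'; intros; subst.
          assert (n = n'). { apply He'. apply sig_eq. congruence. } subst. reflexivity.
      - intros z n m y [h|[k h]].
        + destruct (DM z n m y h) as [y' H']. exists y'. left; exact H'.
        + injection h; intros; subst. exists (proj1_sig (e' m)). right. exists m. reflexivity. }
    apply Hz0. exists (proj1_sig (e' 0)).
    apply (Mmax M' (fun t h => or_introl h) PM' ((z0,0),proj1_sig (e' 0))).
    right. exists 0. reflexivity.
  + destruct (comparability nat {y | R y}) as [H|[k Hk]]. contradiction.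
    assert (Hz1 : exists z1 y1, M ((z1,0),y1)).
    { apply NNPP. intro Hn. apply HR.
      assert (HRe : forall n, R (e n)).
      { intros n [[z m] hm]. destruct (DM z m 0 (e n) hm) as [y' hy]. apply Hn.
        exists z, y'. exact hy. }
      exists (fun n => exist R (e n) (HRe n)). intros a b E. apply He.
      exact (f_equal (@proj1_sig _ _) E). }
    destruct Hz1 as [z1 [y1 Hy1]].
    set (Dm := {z | exists y, M ((z,0),y)}).
    set (d1 := exist (fun z => exists y, M ((z,0),y)) z1 (ex_intro _ y1 Hy1) : Dm).
    assert (C1 : card_le Z (Dm * nat)).
    { apply (cle_rel (fun y (b : Dm * nat) =>
         (exists n, M ((proj1_sig (fst b), n), y) /\ snd b = 2 * n) \/
         (fst b = d1 /\ exists hy : R y, snd b = 2 * k (exist R y hy) + 1))).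
      - intro y. destruct (classic (exists p, M (p,y))) as [[[z n] h]|h].
        + assert (hz : exists y, M ((z,0),y)).
          { destruct (DM z n 0 y h) as [y' h']. exists y'; exact h'. }
          exists (exist _ z hz, 2*n). left. exists n. simpl. auto.
        + exists (d1, 2 * k (exist R y h) + 1). right. simpl. split; auto. exists h; auto.
      - intros a a' [d m] [[n [h1 h2]]|[h1 [hy h2]]] [[n' [h1' h2']]|[h1' [hy' h2']]];
          simpl in *.
        + assert (n = n') by lia. subst. apply (proj1 PM (proj1_sig d, n') a a'); auto.
        + lia.
        + lia.
        + assert (E : exist R a hy = exist R a' hy').
          { apply Hk. lia. }
          exact (f_equal (@proj1_sig _ _) E). }
    assert (C2 : card_le (Dm * nat) Z).
    { apply (cle_rel (fun (b : Dm * nat) y => M ((proj1_sig (fst b), snd b), y))).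
      - intros [[z hz] n]. simpl. destruct hz as [y hy]. apply (DM z 0 n y hy).
      - intros [d n] [d' n'] y h h'. simpl in *.
        assert (E := proj2 PM _ _ y h h'). injection E; intros; subst.
        rewrite (sig_eq _ d d' H0). reflexivity. }
    apply (cle_trans _ ((Dm * nat) * nat)). apply cle_prod; [exact C1 | apply cle_refl].
    apply (cle_trans _ (Dm * (nat * nat))). apply cle_assoc.
    apply (cle_trans _ (Dm * nat)). apply cle_prod; [apply cle_refl | apply cle_natnat].
    exact C2.
Qed.

Lemma inf_sum Z : card_le nat Z -> card_le (Z + Z) Z.
Proof. intro h. apply (cle_trans _ (Z * nat)). apply cle_sum_prod. apply inf_mul, h. Qed.

Lemma inf_mulc Z C : card_le nat Z -> card_le C nat -> card_le (Z * C) Z.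
Proof.
intros h hc. apply (cle_trans _ (Z * nat)). apply cle_prod. apply cle_refl. exact hc.
apply inf_mul, h.
Qed.

Definition rbij {Z1 Z2} (P1 : Z1 -> Prop) (P2 : Z2 -> Prop) (G : Z1 -> Z2 -> Prop) :=
  (forall x u, G x u -> P1 x /\ P2 u) /\ (forall x, P1 x -> exists u, G x u) /\
  (forall u, P2 u -> exists x, G x u) /\ (forall x u u', G x u -> G x u' -> u = u') /\
  (forall x x' u, G x u -> G x' u -> x = x').

Section Real.
Variable A : Type.
Variable w : nat -> word A.

Definition realon {Z} (s : nat -> rel Z) (P : Z -> Prop) :=
  exists f : A -> rel Z, (forall a, partial_perm (f a)) /\
    (forall a x y, f a x y -> P x /\ P y) /\
    (forall n x y, P x -> P y -> (eval_word f (w n) x y <-> s n x y)).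

Definition fl {Z} (f : A -> rel Z) l (R : rel Z) := fold_left (fun R b => rcomp R (f b)) l R.

Lemma eval_fl {Z} (f : A -> rel Z) wd : eval_word f wd = fl f (snd wd) (f (fst wd)).
Proof. reflexivity. Qed.

Lemma fl_support {Z} (f : A -> rel Z) (P : Z -> Prop) :
  (forall a x y, f a x y -> P x /\ P y) ->
  forall l R, (forall x y, R x y -> P x /\ P y) -> forall x y, fl f l R x y -> P x /\ P y.
Proof.
intros H l. induction l as [|a l IH]; simpl; intros R HR x y h. auto.
apply (IH (rcomp R (f a))); [|exact h].
intros x' y' [z [h1 h2]]. split; [apply (HR _ _ h1) | apply (H _ _ _ h2)].
Qed.

Lemma eval_support {Z} (f : A -> rel Z) (P : Z -> Prop) :
  (forall a x y, f a x y -> P x /\ P y) -> forall wd x y, eval_word f wd x y -> P x /\ P y.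
Proof. intros H [a l] x y. rewrite eval_fl. apply (fl_support f P H l (f a)). intros; apply (H a); auto. Qed.

Section Union.
Variables (Z I : Type) (P : I -> Z -> Prop) (fi : I -> A -> rel Z) (f : A -> rel Z).
Hypothesis Hdisj : forall i j z, P i z -> P j z -> i = j.
Hypothesis Hf : forall a x y, f a x y <-> exists i, fi i a x y.
Hypothesis Hsup : forall i a x y, fi i a x y -> P i x /\ P i y.

Lemma fl_union : forall l (R : rel Z) (Ri : I -> rel Z),
  (forall x y, R x y <-> exists i, Ri i x y) -> (forall i x y, Ri i x y -> P i y) ->
  forall x y, fl f l R x y <-> exists i, fl (fi i) l (Ri i) x y.
Proof.
intro l. induction l as [|a l IH]; simpl; intros R Ri HR HRi x y. apply HR.
apply (IH _ (fun i => rcomp (Ri i) (fi i a))).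
- intros x' z. split.
  + intros [m [h1 h2]]. apply HR in h1. apply Hf in h2. destruct h1 as [i h1]. destruct h2 as [j h2].
    assert (i = j). { apply (Hdisj i j m). apply (HRi _ _ _ h1). apply (Hsup _ _ _ _ h2). }
    subst. exists j, m. auto.
  + intros [i [m [h1 h2]]]. exists m. split. apply HR. exists i; auto. apply Hf. exists i; auto.
- intros i x' z [m [h1 h2]]. apply (Hsup _ _ _ _ h2).
Qed.

Lemma eval_union wd x y : eval_word f wd x y <-> exists i, eval_word (fi i) wd x y.
Proof.
destruct wd as [a l]. rewrite eval_fl. apply fl_union.
- intros; apply Hf.
- intros i x' y' h. apply (Hsup _ _ _ _ h).
Qed.
End Union.

Section Transport.
Variables (Z1 Z2 : Type) (P1 : Z1 -> Prop) (P2 : Z2 -> Prop) (G : Z1 -> Z2 -> Prop).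
Hypothesis HG : rbij P1 P2 G.
Variable f1 : A -> rel Z1.
Hypothesis Hsup1 : forall a x y, f1 a x y -> P1 x /\ P1 y.
Definition f2 : A -> rel Z2 := fun a u v => exists x y, G x u /\ G y v /\ f1 a x y.

Lemma fl_transport : forall l R1 R2,
  (forall u v, R2 u v <-> exists x y, G x u /\ G y v /\ R1 x y) ->
  forall u v, fl f2 l R2 u v <-> exists x y, G x u /\ G y v /\ fl f1 l R1 x y.
Proof.
destruct HG as [G1 [G2 [G3 [G4 G5]]]].
intro l. induction l as [|a l IH]; simpl; intros R1 R2 HR u v. apply HR.
apply IH. intros u' z. split.
- intros [m [h1 h2]]. apply HR in h1. destruct h1 as [x [y1 [gx [gy1 r1]]]].
  destruct h2 as [x2 [y2 [gx2 [gy2 r2]]]].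
  assert (y1 = x2) by (apply (G5 _ _ m); auto). subst.
  exists x, y2. split; auto. split; auto. exists x2; auto.
- intros [x [y [gx [gy [m' [h1 h2]]]]]].
  destruct (G2 m' (proj1 (Hsup1 _ _ _ h2))) as [m gm].
  exists m. split. apply HR. exists x, m'; auto. exists m', y; auto.
Qed.

Lemma eval_transport wd u v : eval_word f2 wd u v <-> exists x y, G x u /\ G y v /\ eval_word f1 wd x y.
Proof.
destruct wd as [a l]. rewrite eval_fl. rewrite eval_fl. apply fl_transport. intros; reflexivity.
Qed.
End Transport.

Lemma realon_transport {Z1 Z2} (P1 : Z1 -> Prop) (P2 : Z2 -> Prop) G s1 s2 :
  rbij P1 P2 G -> (forall n x y u v, G x u -> G y v -> (s1 n x y <-> s2 n u v)) ->
  realon s1 P1 -> realon s2 P2.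
Proof.
intros HG Hiso [f1 [pp1 [sup1 ev1]]].
destruct HG as [G1 [G2 [G3 [G4 G5]]]] eqn:EG.
exists (f2 Z1 Z2 G f1). split; [|split].
- intro a. split.
  + intros u v v' [x [y [gx [gy h]]]] [x' [y' [gx' [gy' h']]]].
    assert (x = x') by (apply (G5 _ _ u); auto). subst.
    assert (y = y') by (apply (proj1 (pp1 a) x'); auto). subst. apply (G4 y'); auto.
  + intros u u' v [x [y [gx [gy h]]]] [x' [y' [gx' [gy' h']]]].
    assert (y = y') by (apply (G5 _ _ v); auto). subst.
    assert (x = x') by (apply (proj2 (pp1 a) _ _ y'); auto). subst. apply (G4 x'); auto.
- intros a u v [x [y [gx [gy h]]]]. split; [apply (G1 _ _ gx) | apply (G1 _ _ gy)].
- intros n u v pu pv. destruct (G3 u pu) as [x gx]. destruct (G3 v pv) as [y gy].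
  rewrite (eval_transport Z1 Z2 P1 P2 G HG f1 sup1).
  rewrite <- (Hiso n x y u v gx gy).
  split.
  + intros [x' [y' [gx' [gy' h]]]].
    assert (x = x') by (apply (G5 _ _ u); auto). assert (y = y') by (apply (G5 _ _ v); auto).
    subst. apply ev1; auto. apply (G1 _ _ gx). apply (G1 _ _ gy).
  + intro h. exists x, y. split; auto. split; auto. apply ev1; auto.
    apply (G1 _ _ gx). apply (G1 _ _ gy).
Qed.



Definition realon_w {Z} (f : A -> rel Z) (s : nat -> rel Z) (P : Z -> Prop) :=
  (forall a, partial_perm (f a)) /\ (forall a x y, f a x y -> P x /\ P y) /\
  (forall n x y, P x -> P y -> (eval_word f (w n) x y <-> s n x y)).

Lemma realon_ext {Z} (s : nat -> rel Z) (P Q : Z -> Prop) :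
  (forall z, P z <-> Q z) -> realon s P -> realon s Q.
Proof.
intros E [f [h1 [h2 h3]]]. exists f. split; [exact h1|split].
- intros a x y h. destruct (h2 _ _ _ h). split; apply E; auto.
- intros n x y qx qy. apply h3; apply E; auto.
Qed.

Lemma realon_empty {Z} (s : nat -> rel Z) : realon s (fun _ => False).
Proof.
exists (fun _ _ _ => False). split; [|split].
- intro a; split; intros; contradiction.
- intros; contradiction.
- intros; contradiction.
Qed.

Lemma realon_union {Z I} (s : nat -> rel Z) (P : I -> Z -> Prop) :
  (forall i j z, P i z -> P j z -> i = j) ->
  (forall i, realon s (P i)) ->
  (forall n i j x y, P i x -> P j y -> s n x y -> i = j) ->
  realon s (fun z => exists i, P i z).
Proof.
intros Hd Hr Hb.
destruct (choice_fun (fun i f => realon_w f s (P i)) Hr) as [fi Hfi].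
set (f := fun a x y => exists i, fi i a x y).
assert (Hsup : forall i a x y, fi i a x y -> P i x /\ P i y).
{ intro i. exact (proj1 (proj2 (Hfi i))). }
exists f. split; [|split].
- intro a. split.
  + intros x y y' [i h] [j h']. assert (i = j).
    { apply (Hd i j x); [apply (Hsup _ _ _ _ h) | apply (Hsup _ _ _ _ h')]. }
    subst. apply (proj1 (proj1 (Hfi j) a) x); auto.
  + intros x x' y [i h] [j h']. assert (i = j).
    { apply (Hd i j y); [apply (Hsup _ _ _ _ h) | apply (Hsup _ _ _ _ h')]. }
    subst. apply (proj2 (proj1 (Hfi j) a) x x' y); auto.
- intros a x y [i h]. destruct (Hsup _ _ _ _ h). split; exists i; auto.
- intros n x y [i px] [j py].
  rewrite (eval_union Z I P fi f Hd (fun a x y => iff_refl _) Hsup). split.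
  + intros [k h]. destruct (eval_support (fi k) (P k) (Hsup k) _ _ _ h) as [hx hy].
    apply (proj2 (proj2 (Hfi k))); auto.
  + intro h. assert (i = j) by (apply (Hb n i j x y); auto). subst.
    exists j. apply (proj2 (proj2 (Hfi j))); auto.
Qed.

Lemma realon_restrict {Z} (s : nat -> rel Z) (P Q : Z -> Prop) f :
  realon_w f s P -> (forall z, Q z -> P z) ->
  (forall a x y, f a x y -> (Q x <-> Q y)) -> realon s Q.
Proof.
intros [pp [sup ev]] QP Hc.
set (fi := fun (b : bool) a x y => f a x y /\ (if b then Q x else ~ Q x)).
set (Pb := fun (b : bool) z => P z /\ (if b then Q z else ~ Q z)).
assert (Hd : forall i j z, Pb i z -> Pb j z -> i = j).
{ intros [|] [|] z [_ h] [_ h']; auto; contradiction. }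
assert (Hf : forall a x y, f a x y <-> exists i, fi i a x y).
{ intros a x y. split.
  - intro h. destruct (classic (Q x)) as [q|q]. exists true; split; auto. exists false; split; auto.
  - intros [i [h _]]; auto. }
assert (Hsup : forall i a x y, fi i a x y -> Pb i x /\ Pb i y).
{ intros [|] a x y [h q]; destruct (sup _ _ _ h); unfold Pb; simpl.
  - split; split; auto. apply (Hc _ _ _ h); auto.
  - split; split; auto. intro q'. apply q. apply (Hc _ _ _ h); auto. }
exists (fi true). split; [|split].
- intro a. split.
  + intros x y y' [h _] [h' _]. apply (proj1 (pp a) x); auto.
  + intros x x' y [h _] [h' _]. apply (proj2 (pp a) x x' y); auto.
- intros a x y h. destruct (Hsup true a x y h) as [[_ h1] [_ h2]]. auto.
- intros n x y qx qy. rewrite <- (ev n x y (QP _ qx) (QP _ qy)).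
  rewrite (eval_union Z bool Pb fi f Hd Hf Hsup). split.
  + intro h. exists true. exact h.
  + intros [[|] h]. exact h.
    destruct (eval_support (fi false) (Pb false) (Hsup false) _ _ _ h) as [[_ hx] _].
    contradiction.
Qed.

Lemma universal_realon {X Z} (s : nat -> rel Z) (P : Z -> Prop) (G : X -> Z -> Prop) :
  universal X A w -> rbij (fun _ => True) P G -> (forall n, partial_perm (s n)) -> realon s P.
Proof.
intros U HG pps.
destruct HG as [G1 [G2 [G3 [G4 G5]]]] eqn:EG.
set (s1 := fun n x y => exists u v, G x u /\ G y v /\ s n u v).
assert (iso : forall n x y u v, G x u -> G y v -> (s1 n x y <-> s n u v)).
{ intros n x y u v gx gy. split.
  - intros [u' [v' [gx' [gy' h]]]]. rewrite (G4 _ _ _ gx gx'). rewrite (G4 _ _ _ gy gy'). exact h.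
  - intro h. exists u, v. auto. }
apply (realon_transport (fun _ => True) P G s1 s HG iso).
destruct (U s1) as [f [ppf ev]].
- intro n. split.
  + intros x y y' [u [v [gx [gy h]]]] [u' [v' [gx' [gy' h']]]].
    rewrite (G4 _ _ _ gx gx') in h. assert (v = v') by (apply (proj1 (pps n) u'); auto). subst.
    apply (G5 _ _ v'); auto.
  + intros x x' y [u [v [gx [gy h]]]] [u' [v' [gx' [gy' h']]]].
    rewrite (G4 _ _ _ gy gy') in h. assert (u = u') by (apply (proj2 (pps n) u u' v'); auto). subst.
    apply (G5 _ _ u'); auto.
- exists f. split; [exact ppf|split]. intros; split; auto. intros n x y _ _. apply ev.
Qed.

Lemma realon_global {Z} (s : nat -> rel Z) : realon s (fun _ => True) ->
  exists f : A -> rel Z, (forall a, partial_perm (f a)) /\ forall n, rel_eq (eval_word f (w n)) (s n).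
Proof.
intros [f [h1 [h2 h3]]]. exists f. split; auto. intros n x y. apply h3; auto.
Qed.

End Real.

Section Reach.
Variables (J Z : Type) (r : J -> rel Z).
Definition step (x y : Z) := exists j, r j x y \/ r j y x.
Definition Reach := clos_refl_trans Z step.
Definition Cl (Q : Z -> Prop) (y : Z) := exists x, Q x /\ Reach x y.
Definition closedr (Q : Z -> Prop) := forall x y, step x y -> Q x -> Q y.

Lemma step_sym x y : step x y -> step y x.
Proof. intros [j [h|h]]; exists j; auto. Qed.

Lemma Reach_sym x y : Reach x y -> Reach y x.
Proof.
intro h. induction h. apply rt_step, step_sym; auto. apply rt_refl. eapply rt_trans; eauto.
Qed.

Lemma closed_back Q : closedr Q -> forall x y, step x y -> Q y -> Q x.
Proof. intros H x y h q. apply (H y x); auto. apply step_sym; auto. Qed.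

Lemma closed_reach Q : closedr Q -> forall x y, Reach x y -> Q x -> Q y.
Proof. intros H x y h. induction h; auto. apply H; auto. Qed.

Lemma Cl_closed Q : closedr (Cl Q).
Proof. intros x y h [z [q r']]. exists z. split; auto. eapply rt_trans; eauto. apply rt_step; auto. Qed.

Lemma Cl_incl Q x : Q x -> Cl Q x.
Proof. intro q. exists x. split; auto. apply rt_refl. Qed.

Lemma Cl_min Q R : (forall x, Q x -> R x) -> closedr R -> forall x, Cl Q x -> R x.
Proof. intros H1 H2 x [z [q h]]. apply (closed_reach R H2 z); auto. Qed.

Fixpoint walk (x : Z) (p : list (J * bool)) (y : Z) : Prop :=
  match p with
  | nil => x = y
  | (j,b) :: p => exists z, (if b then r j x z else r j z x) /\ walk z p y
  end.

Hypothesis ppr : forall j, partial_perm (r j).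

Lemma walk_fun p : forall x y y', walk x p y -> walk x p y' -> y = y'.
Proof.
induction p as [|[j b] p IH]; simpl; intros x y y' h h'. congruence.
destruct h as [z [hz h]]. destruct h' as [z' [hz' h']].
assert (z = z'). { destruct b. apply (proj1 (ppr j) x); auto. apply (proj2 (ppr j) z z' x); auto. }
subst. apply (IH z'); auto.
Qed.

Lemma reach_walk x y : Reach x y -> exists p, walk x p y.
Proof.
intro h. apply clos_rt_rt1n in h. induction h.
- exists nil. reflexivity.
- destruct IHh as [p hp]. destruct H as [j [h1|h1]].
  + exists ((j,true)::p). exists y. auto.
  + exists ((j,false)::p). exists y. auto.
Qed.

Variable c : J -> nat.
Hypothesis Hc : injective c.
Definition pr (a b : nat) := Cantor.to_nat (a,b).
Arguments pr : simpl never.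
Lemma pr_inj a b a' b' : pr a b = pr a' b' -> a = a' /\ b = b'.
Proof. unfold pr. intro h. assert (E := f_equal Cantor.of_nat h).
rewrite !Cantor.cancel_of_to in E. injection E; auto. Qed.
Fixpoint enc (p : list (J * bool)) : nat :=
  match p with
  | nil => 0
  | (j,b) :: p => S (pr (pr (c j) (if b then 1 else 0)) (enc p))
  end.

Lemma to_nat_inj a b : Cantor.to_nat a = Cantor.to_nat b -> a = b.
Proof. intro h. rewrite <- (Cantor.cancel_of_to a). rewrite <- (Cantor.cancel_of_to b). rewrite h. reflexivity. Qed.

Lemma enc_inj p q : enc p = enc q -> p = q.
Proof.
revert q. induction p as [|[j b] p IH]; intros [|[j' b'] q]; cbn [enc]; intro h; try discriminate; auto.
apply eq_add_S in h. apply pr_inj in h. destruct h as [h3 h2].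
apply pr_inj in h3. destruct h3 as [h5 h4]. apply Hc in h5. subst.
rewrite (IH q h2). destruct b, b'; simpl in h4; try discriminate; reflexivity.
Qed.

Lemma Cl_count Q : card_le {y | Cl Q y} ({x | Q x} * nat).
Proof.
apply (cle_rel (fun (y : {y | Cl Q y}) (b : {x | Q x} * nat) =>
   exists p, walk (proj1_sig (fst b)) p (proj1_sig y) /\ snd b = enc p)).
- intros [y [x [q h]]]. destruct (reach_walk _ _ h) as [p hp].
  exists (exist _ x q, enc p). exists p. auto.
- intros y y' [q n] [p [h1 h2]] [p' [h1' h2']]. simpl in *. subst.
  apply enc_inj in h2'. subst. apply sig_eq. apply (walk_fun p' (proj1_sig q)); auto.
Qed.

End Reach.

Lemma fl_reach {A Z} (f : A -> rel Z) : forall l R,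
  (forall x y, R x y -> Reach A Z f x y) -> forall x y, fl A f l R x y -> Reach A Z f x y.
Proof.
intro l. induction l as [|a l IH]; simpl; intros R HR x y h. auto.
apply (IH (rcomp R (f a))); auto. intros x' z [m [h1 h2]].
eapply rt_trans. apply HR; eauto. apply rt_step. exists a. auto.
Qed.

Lemma eval_reach {A Z} (f : A -> rel Z) wd x y : eval_word f wd x y -> Reach A Z f x y.
Proof.
destruct wd as [a l]. intro h. apply (fl_reach f l (f a)); auto.
intros x' y' h'. apply rt_step. exists a. auto.
Qed.

Lemma cle_rbij {X Z} (P : Z -> Prop) :
  card_le X {y | P y} -> card_le {y | P y} X -> exists G, rbij (fun _ : X => True) P G.
Proof.
intros h1 h2. destruct (SB _ _ h1 h2) as [h [hi hs]].
exists (fun x y => proj1_sig (h x) = y). split; [|split; [|split; [|split]]].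
- intros x u e. subst. split; auto. exact (proj2_sig (h x)).
- intros x _. exists (proj1_sig (h x)). reflexivity.
- intros u pu. destruct (hs (exist _ u pu)) as [x e]. exists x. rewrite e. reflexivity.
- intros x u u' e e'. congruence.
- intros x x' u e e'. apply hi. apply sig_eq. congruence.
Qed.

Lemma rbij_cle {X Z} (P : Z -> Prop) G : rbij (fun _ : X => True) P G ->
  card_le X {y | P y} /\ card_le {y | P y} X.
Proof.
intros [G1 [G2 [G3 [G4 G5]]]]. split.
- apply (cle_rel (fun x (y : {y | P y}) => G x (proj1_sig y))).
  + intro x. destruct (G2 x I) as [u gu]. exists (exist _ u (proj2 (G1 _ _ gu))). exact gu.
  + intros x x' y h h'. apply (G5 _ _ _ h h').
- apply (cle_rel (fun (y : {y | P y}) x => G x (proj1_sig y))).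
  + intros [y py]. apply (G3 y py).
  + intros y y' x h h'. apply sig_eq. apply (G4 x); auto.
Qed.

Lemma part_i_real (A : Type) (w : nat -> word A) X Y (s : nat -> rel Y) :
  infinite X -> card_le X Y -> universal X A w -> (forall n, partial_perm (s n)) ->
  realon A w s (fun _ => True).
Proof.
intros infX XY U pps.
set (good := fun B : Y -> Prop => (exists G, rbij (fun _ : X => True) B G) /\ closedr nat Y s B).
set (Pfam := fun F : (Y -> Prop) -> Prop => (forall B, F B -> good B) /\
   (forall B B' y, F B -> F B' -> B y -> B' y -> B = B')).
destruct (ZW.myzorn _ Pfam) as [F [[Fg Fd] Fmax]].
{ intros FF HFF Htot. split.
  - intros B [F' [hF' hB]]. apply (proj1 (HFF F' hF')). auto.
  - intros B B' y [F1 [h1 hB]] [F2 [h2 hB']] by1 by2.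
    destruct (Htot F1 F2 h1 h2) as [i|i].
    + apply (proj2 (HFF F2 h2) B B' y); auto.
    + apply (proj2 (HFF F1 h1) B B' y); auto. }
set (R := fun y => forall B, F B -> ~ B y).
assert (Rc : closedr nat Y s R).
{ intros x y h rx B fb by'. apply (rx B fb). apply (closed_back nat Y s B (proj2 (Fg B fb)) x y h by'). }
destruct infX as [e0 He0].
destruct (classic (card_le X {y | R y})) as [HR|HR].
- exfalso. destruct HR as [e He].
  set (Im := fun y => exists x, proj1_sig (e x) = y).
  set (B' := Cl nat Y s Im).
  assert (gB' : good B').
  { split; [|apply Cl_closed].
    apply cle_rbij.
    - apply (cle_rel (fun x (y : {y | B' y}) => proj1_sig (e x) = proj1_sig y)).
      + intro x. exists (exist _ (proj1_sig (e x)) (Cl_incl nat Y s Im _ (ex_intro _ x eq_refl))). reflexivity.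
      + intros x x' y h h'. apply He. apply sig_eq. congruence.
    - apply (cle_trans _ ({y | Im y} * nat)).
      { apply (Cl_count nat Y s pps (fun n => n)). intros a b h; exact h. }
      apply (cle_trans _ (X * nat)). apply cle_prod; [|apply cle_refl].
      + apply (cle_rel (fun (y : {y | Im y}) x => proj1_sig (e x) = proj1_sig y)).
        * intros [y [x hx]]. exists x. exact hx.
        * intros y y' x h h'. apply sig_eq. congruence.
      + apply inf_mul. exists e0; exact He0. }
  assert (B'R : forall y, B' y -> R y).
  { apply Cl_min. intros y [x hx]. subst. exact (proj2_sig (e x)). exact Rc. }
  set (F' := fun B => F B \/ B = B').
  assert (PF' : Pfam F').
  { split.
    - intros B [h|h]. auto. subst; auto.
    - intros B1 B2 y [h1|h1] [h2|h2] y1 y2.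
      + apply (Fd B1 B2 y); auto.
      + subst. exfalso. apply (B'R y y2 B1 h1 y1).
      + subst. exfalso. apply (B'R y y1 B2 h2 y2).
      + congruence. }
  assert (FB' : F B').
  { apply (Fmax F'). intros t h; left; auto. exact PF'. right; reflexivity. }
  apply (proj2_sig (e (e0 0)) B' FB'). apply Cl_incl. exists (e0 0). reflexivity.
- destruct (comparability X {y | R y}) as [H|Hk]. contradiction.
  destruct (classic (exists B0, F B0)) as [[B0 FB0]|NF].
  2: { exfalso. apply HR. destruct XY as [g Hg].
       assert (Rall : forall y, R y). { intros y B fb _. apply NF. exists B; auto. }
       exists (fun x => exist R (g x) (Rall (g x))). intros a b h. apply Hg.
       exact (f_equal (@proj1_sig _ _) h). }
  set (Pi := fun (B : Y -> Prop) y => F B /\ (B y \/ (B = B0 /\ R y))).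
  assert (Hd : forall i j z, Pi i z -> Pi j z -> i = j).
  { intros i j z [fi [hi|[ei ri]]] [fj [hj|[ej rj]]].
    * apply (Fd i j z); auto.
    * exfalso. apply (rj i fi hi).
    * exfalso. apply (ri j fj hj).
    * congruence. }
  apply (realon_ext A w s (fun z => exists i, Pi i z)).
  { intro z. split; auto. intros _. destruct (classic (exists B, F B /\ B z)) as [[B [fb bz]]|nb].
    exists B. split; auto. exists B0. split; auto. right. split; auto. intros B fb bz. apply nb.
    exists B; auto. }
  apply realon_union.
  + exact Hd.
  + intro B. destruct (classic (F B)) as [fb|nfb].
    * destruct (classic (B = B0)) as [e|ne].
      -- subst B.
         destruct (Fg B0 FB0) as [[G0 HG0] _].
         destruct (rbij_cle _ _ HG0) as [c1 c2].
         assert (HG : exists G, rbij (fun _ : X => True) (fun y => B0 y \/ R y) G).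
         { apply cle_rbij.
           - eapply cle_trans. exact c1.
             apply (cle_rel (fun (y : {y | B0 y}) (y' : {y | B0 y \/ R y}) => proj1_sig y = proj1_sig y')).
             + intros [y hy]. exists (exist _ y (or_introl hy)). reflexivity.
             + intros a b c h h'. apply sig_eq. congruence.
           - apply (cle_trans _ ({y | B0 y} + {y | R y})).
             + apply (cle_rel (fun (y : {y | B0 y \/ R y}) (t : {y | B0 y} + {y | R y}) =>
                  match t with inl a => proj1_sig a = proj1_sig y | inr b => proj1_sig b = proj1_sig y end)).
               * intros [y [hy|hy]]. exists (inl (exist _ y hy)). reflexivity.
                 exists (inr (exist _ y hy)). reflexivity.
               * intros a b [t|t] h h'; apply sig_eq; congruence.
             + apply (cle_trans _ (X + X)). apply cle_sum; auto. apply inf_sum. exists e0; auto. }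
         destruct HG as [G HG].
         apply (realon_ext A w s (fun y => B0 y \/ R y)).
         { intro z. unfold Pi. split. intros [h|h]; split; auto. intros [_ [h|[_ h]]]; auto. }
         apply (universal_realon A w s _ G U HG pps).
      -- destruct (Fg B fb) as [[G HG] _].
         apply (realon_ext A w s B).
         { intro z; unfold Pi; split. intro; split; auto. intros [_ [h|[h _]]]; auto. contradiction. }
         apply (universal_realon A w s _ G U HG pps).
    * apply (realon_ext A w s (fun _ => False)).
      { intro z; unfold Pi; split. contradiction. intros [h _]; contradiction. }
      apply realon_empty.
  + intros n i j x y [fi hi] hj hs.
    assert (st : step nat Y s x y) by (exists n; auto).
    apply (Hd i j y); auto.
    split; auto. destruct hi as [hi|[ei ri]].
    * left. apply (proj2 (Fg i fi) x y st hi).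
    * right. split; auto. apply (Rc x y st ri).
Qed.

Lemma part_i (A : Type) (w : nat -> word A) X Y :
  infinite X -> card_le X Y -> universal X A w -> universal Y A w.
Proof.
intros h1 h2 U s pps. apply realon_global. apply (part_i_real A w X Y s h1 h2 U pps).
Qed.

Definition eps {T} (i : T) (P : T -> Prop) : T :=
  match dec (exists x, P x) with left h => proj1_sig (cid h) | right _ => i end.
Lemma eps_spec {T} i (P : T -> Prop) : (exists x, P x) -> P (eps i P).
Proof. intro h. unfold eps. destruct (dec _) as [h'|h']. exact (proj2_sig (cid h')). contradiction. Qed.
Lemma eps_indep {T} i i' (P : T -> Prop) : (exists x, P x) -> eps i P = eps i' P.
Proof. intro h. unfold eps. destruct (dec _) as [h'|h']. reflexivity. contradiction. Qed.

Definition CB := nat -> bool.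
Definition Code := nat -> nat -> nat -> Prop.

Lemma cle_nat_CB : card_le nat CB.
Proof. exists (fun n k => Nat.eqb k n). intros a b h. assert (E := f_equal (fun f => f a) h).
simpl in E. rewrite Nat.eqb_refl in E. symmetry in E. apply Nat.eqb_eq in E. auto. Qed.

Lemma cle_CB2 : card_le (CB * CB) CB.
Proof.
exists (fun p k => if Nat.even k then fst p (Nat.div2 k) else snd p (Nat.div2 k)).
intros [f g] [f' g'] h. simpl in h.
assert (E1 : forall k, f k = f' k).
{ intro k. assert (E := f_equal (fun F => F (2*k)) h). cbv beta in E.
  rewrite Nat.even_even in E. rewrite Nat.div2_double in E. exact E. }
assert (E2 : forall k, g k = g' k).
{ intro k. assert (E := f_equal (fun F => F (2*k+1)) h). cbv beta in E.
  rewrite Nat.even_odd in E. rewrite Nat.div2_odd' in E. exact E. }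
apply functional_extensionality in E1. apply functional_extensionality in E2. subst. reflexivity.
Qed.

Lemma cle_CBnat : card_le (CB * nat) CB.
Proof. apply (cle_trans _ (CB * CB)). apply cle_prod. apply cle_refl. apply cle_nat_CB. apply cle_CB2. Qed.

Lemma cle_Code : card_le Code CB.
Proof.
exists (fun c k => let (a, b) := Cantor.of_nat k in let (i, j) := Cantor.of_nat b in
          if dec (c a i j) then true else false).
intros c c' h.
apply functional_extensionality. intro a. apply functional_extensionality. intro i.
apply functional_extensionality. intro j. apply propositional_extensionality.
assert (E := f_equal (fun F => F (Cantor.to_nat (a, Cantor.to_nat (i, j)))) h). cbv beta in E.
rewrite Cantor.cancel_of_to in E. rewrite Cantor.cancel_of_to in E.
destruct (dec (c a i j)) as [h1|h1]; destruct (dec (c' a i j)) as [h2|h2];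
  try discriminate; split; intro; auto; contradiction.
Qed.

Section Comp.
Variables (X : Type) (s : nat -> rel X).
Hypothesis pps : forall n, partial_perm (s n).
Definition RX := Reach nat X s.

Lemma RX_sym x y : RX x y -> RX y x. Proof. apply Reach_sym. Qed.
Lemma RX_trans x y z : RX x y -> RX y z -> RX x z. Proof. apply rt_trans. Qed.

Definition rep x := eps x (RX x).
Lemma rep_reach x : RX x (rep x).
Proof. unfold rep. apply (eps_spec x (RX x)). exists x. apply rt_refl. Qed.
Lemma RX_ext x x' : RX x x' -> RX x = RX x'.
Proof.
intro h. apply functional_extensionality. intro y. apply propositional_extensionality.
split; intro h'. apply (RX_trans _ x). apply RX_sym; auto. auto. apply (RX_trans _ x'); auto.
Qed.
Lemma rep_eq x x' : RX x x' -> rep x = rep x'.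
Proof. intro h. unfold rep. rewrite (RX_ext x x' h). apply eps_indep. exists x'. apply rt_refl. Qed.
Lemma rep_idem x : rep (rep x) = rep x.
Proof. symmetry. apply rep_eq. apply rep_reach. Qed.
Lemma rep_step n x y : s n x y -> rep x = rep y.
Proof. intro h. apply rep_eq. apply rt_step. exists n. auto. Qed.
Lemma reach_rep m x : rep m = m -> RX m x -> rep x = m.
Proof. intros h1 h2. rewrite <- h1. symmetry. apply rep_eq. auto. Qed.
Lemma rep_reach' x : RX (rep x) x.
Proof. apply RX_sym, rep_reach. Qed.

Lemma comp_count x : card_le {y | RX x y} nat.
Proof.
apply (cle_trans _ {y | Cl nat X s (fun z => z = x) y}).
{ apply (cle_rel (fun (y : {y | RX x y}) (y' : {y | Cl nat X s (fun z => z = x) y}) => proj1_sig y = proj1_sig y')).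
  - intros [y h]. exists (exist _ y (ex_intro _ x (conj eq_refl h))). reflexivity.
  - intros a b c h h'. apply sig_eq. congruence. }
apply (cle_trans _ ({z | z = x} * nat)).
{ apply (Cl_count nat X s pps (fun n => n)). intros a b h; exact h. }
exists (fun p => snd p). intros [a n] [b m] h. simpl in h. subst.
rewrite (sig_eq _ a b). reflexivity. destruct a, b. simpl. congruence.
Qed.

Lemma en_exists : exists en : X -> nat -> X, forall x,
  (forall i, RX x (en x i)) /\ (forall y, RX x y -> exists i, en x i = y).
Proof.
apply (choice_fun (fun x e => (forall i, RX x (e i)) /\ (forall y, RX x y -> exists i, e i = y))).
intro x. destruct (comp_count x) as [k hk].
exists (fun i => eps x (fun y => exists h : RX x y, k (exist _ y h) = i)). split.
- intro i. destruct (classic (exists y, exists h : RX x y, k (exist _ y h) = i)) as [e|e].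
  + destruct (eps_spec x _ e) as [h _]. exact h.
  + unfold eps. destruct (dec _). contradiction. apply rt_refl.
- intros y h. exists (k (exist _ y h)).
  assert (e : exists y', exists h' : RX x y', k (exist _ y' h') = k (exist _ y h)).
  { exists y, h. reflexivity. }
  destruct (eps_spec x _ e) as [h' E]. apply hk in E. exact (f_equal (@proj1_sig _ _) E).
Qed.

Definition en := proj1_sig (cid en_exists).
Lemma en_in x i : RX x (en x i). Proof. exact (proj1 (proj2_sig (cid en_exists) x) i). Qed.
Lemma en_surj x y : RX x y -> exists i, en x i = y. Proof. exact (proj2 (proj2_sig (cid en_exists) x) y). Qed.

Definition code (x : X) : Code := fun n i j =>
  match n with 0 => en x i = en x j | S m => s m (en x i) (en x j) end.

Definition Giso r m u v := exists i, en r i = u /\ en m i = v.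

Lemma giso_rbij r m : code r = code m -> rbij (RX r) (RX m) (Giso r m).
Proof.
intro hc.
assert (E0 : forall i j, en r i = en r j <-> en m i = en m j).
{ intros i j. assert (E := f_equal (fun c => c 0 i j) hc). simpl in E. rewrite E. reflexivity. }
split; [|split; [|split; [|split]]].
- intros u v [i [h1 h2]]. subst. split; apply en_in.
- intros u hu. destruct (en_surj _ _ hu) as [i hi]. exists (en m i). exists i. auto.
- intros v hv. destruct (en_surj _ _ hv) as [i hi]. exists (en r i). exists i. auto.
- intros u v v' [i [h1 h2]] [j [h1' h2']]. subst. apply E0. auto.
- intros u u' v [i [h1 h2]] [j [h1' h2']]. subst. apply E0. auto.
Qed.

Lemma giso_iso r m n u u' v v' : code r = code m -> Giso r m u u' -> Giso r m v v' ->
  (s n u v <-> s n u' v').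
Proof.
intros hc [i [h1 h2]] [j [h1' h2']]. subst.
assert (E := f_equal (fun c => c (S n) i j) hc). simpl in E. rewrite E. reflexivity.
Qed.

End Comp.

Lemma cle_sigT T : card_le T {x : T | True}.
Proof. exists (fun x => exist _ x I). intros a b h. exact (f_equal (@proj1_sig _ _) h). Qed.

Section GL.
Variables (A : Type) (w : nat -> word A) (c : A -> nat).
Hypothesis Hc : injective c.
Variables (X : Type) (s : nat -> rel X).
Hypothesis pps : forall n, partial_perm (s n).
Variable Y : Type.
Hypothesis U : universal Y A w.
Hypothesis Yinf : card_le nat Y.
Variables (W : Type) (sW : nat -> rel W).
Hypothesis ppW : forall n, partial_perm (sW n).
Hypothesis WY : card_le W Y.
Variables (r : X) (y0 : Y).

Definition CC := {x | RX X s r x}.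
Definition Zt := (W + (Y * CC))%type.
Definition sZ (n : nat) : rel Zt := fun u v =>
  match u, v with
  | inl a, inl b => sW n a b
  | inr (y, c1), inr (y', c2) => y = y' /\ s n (proj1_sig c1) (proj1_sig c2)
  | _, _ => False
  end.

Lemma sZ_pp n : partial_perm (sZ n).
Proof.
split.
- intros [a|[y c1]] [b|[y' c2]] [b'|[y'' c3]]; simpl; intros h h'; try contradiction.
  + rewrite (proj1 (ppW n) a b b'); auto.
  + destruct h, h'. subst. rewrite (sig_eq _ c2 c3). reflexivity.
    apply (proj1 (pps n) (proj1_sig c1)); auto.
- intros [a|[y c1]] [b|[y' c2]] [b'|[y'' c3]]; simpl; intros h h'; try contradiction.
  + rewrite (proj2 (ppW n) a b b'); auto.
  + destruct h, h'. subst. rewrite (sig_eq _ c1 c2). reflexivity.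
    apply (proj2 (pps n) _ _ (proj1_sig c3)); auto.
Qed.

Definition c0 : CC := exist _ r (rt_refl _ _ r).

Lemma conn_CC y x x' : RX X s x x' -> forall (hx : RX X s r x) (hx' : RX X s r x'),
  Reach nat Zt sZ (inr (y, exist _ x hx)) (inr (y, exist _ x' hx')).
Proof.
intro h. induction h as [x x' st| x | x m x' h1 IH1 h2 IH2]; intros hx hx'.
- apply rt_step. destruct st as [n [st|st]]; exists n; [left|right]; simpl; split; auto.
- rewrite (proof_irrelevance _ hx hx'). apply rt_refl.
- assert (hm : RX X s r m) by (exact (rt_trans _ _ r x m hx h1)).
  eapply rt_trans. apply (IH1 hx hm). apply (IH2 hm hx').
Qed.

Lemma GL : exists S : Y -> Prop, S y0 /\ card_le {y | S y} ((W + unit) * nat) /\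
  realon A w sZ (fun z => match z with inl _ => True | inr p => S (fst p) end).
Proof.
assert (HG : exists G, rbij (fun _ : Y => True) (fun _ : Zt => True) G).
{ apply cle_rbij.
  - apply (cle_trans _ Zt); [|apply cle_sigT].
    exists (fun y => inr (y, c0)). intros a b h. injection h; auto.
  - apply (cle_trans _ Zt). apply cle_sig.
    apply (cle_trans _ (Y + Y)). apply cle_sum. exact WY.
    apply inf_mulc; auto. apply comp_count; auto.
    apply inf_sum; auto. }
destruct HG as [G HG].
destruct (universal_realon A w sZ _ G U HG sZ_pp) as [f Hf].
set (Q0 := fun z : Zt => (exists a, z = inl a) \/ z = inr (y0, c0)).
set (D := Cl A Zt f Q0).
assert (Dc : closedr nat Zt sZ D).
{ intros u v [n st] du.
  assert (Rv : Reach A Zt f u v).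
  { destruct st as [st|st].
    - apply (eval_reach f (w n)). apply (proj2 (proj2 Hf)); auto.
    - apply Reach_sym. apply (eval_reach f (w n)). apply (proj2 (proj2 Hf)); auto. }
  apply (closed_reach A Zt f D (Cl_closed A Zt f Q0) u v Rv du). }
assert (HD : forall y (cc : CC), D (inr (y, cc)) <-> D (inr (y, c0))).
{ intros y [x hx]. unfold c0.
  assert (R1 := conn_CC y r x hx (rt_refl _ _ r) hx).
  split; intro h.
  - apply (closed_reach nat Zt sZ D Dc _ _ (Reach_sym _ _ _ _ _ R1) h).
  - apply (closed_reach nat Zt sZ D Dc _ _ R1 h). }
exists (fun y => D (inr (y, c0))). split; [|split].
- apply Cl_incl. right. reflexivity.
- apply (cle_trans _ {z | D z}).
  { apply (cle_rel (fun (y : {y | D (inr (y, c0))}) (z : {z | D z}) => proj1_sig z = inr (proj1_sig y, c0))).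
    - intros [y h]. exists (exist _ (inr (y, c0)) h). reflexivity.
    - intros a b z h h'. apply sig_eq. rewrite h in h'. injection h'. auto. }
  apply (cle_trans _ ({z | Q0 z} * nat)).
  { apply (Cl_count A Zt f (proj1 Hf) c Hc Q0). }
  apply cle_prod; [|apply cle_refl].
  apply (cle_rel (fun (z : {z | Q0 z}) (t : W + unit) =>
      match t with inl a => proj1_sig z = inl a | inr _ => proj1_sig z = inr (y0, c0) end)).
  + intros [z [[a e]|e]]. exists (inl a). exact e. exists (inr tt). exact e.
  + intros a b [t|t] h h'; apply sig_eq; congruence.
- apply (realon_ext A w sZ D).
  { intros [a|[y cc]]. split; auto. intros _. apply Cl_incl. left. exists a. reflexivity.
    simpl. apply HD. }
  apply (realon_restrict A w sZ (fun _ => True) D f Hf). auto.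
  intros a x y h. split; intro hd.
  + apply (Cl_closed A Zt f Q0 x y); auto. exists a. left; auto.
  + apply (closed_back A Zt f D (Cl_closed A Zt f Q0) x y); auto. exists a. left; auto.
Qed.
End GL.

Lemma dep_choice {T} (B : T -> Type) (R : forall t, B t -> Prop) :
  (forall t, exists b : B t, R t b) -> exists F : forall t, B t, forall t, R t (F t).
Proof.
intro H. exists (fun t => proj1_sig (cid (H t))). intro t. exact (proj2_sig (cid (H t))).
Qed.

Lemma cle_sub {T} (P P' : T -> Prop) : (forall x, P x -> P' x) -> card_le {x | P x} {x | P' x}.
Proof.
intro H. exists (fun a => exist P' (proj1_sig a) (H _ (proj2_sig a))).
intros a b h. apply sig_eq. exact (f_equal (@proj1_sig _ _) h).
Qed.

Lemma cle_CBsum : card_le (CB + CB) CB.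
Proof. apply (cle_trans _ (CB * nat)). apply cle_sum_prod. apply cle_CBnat. Qed.

Section Part2.
Variables (A : Type) (w : nat -> word A) (c : A -> nat).
Hypothesis Hc : injective c.
Variables (X : Type) (s : nat -> rel X).
Hypothesis pps : forall n, partial_perm (s n).
Variable Y : Type.
Hypothesis U : universal Y A w.
Hypothesis CBX : card_lt CB X.
Hypothesis XY : card_le X Y.

Let rp := rep X s.
Let cd := code X s pps.
Definition isrep m := rp m = m.
Definition Mt (t : Code) m := isrep m /\ cd m = t.
Definition fin (t : Code) := ~ card_le nat {m | Mt t m}.
Definition Xb x := fin (cd (rp x)).

Lemma rp_isrep x : isrep (rp x).
Proof. unfold isrep, rp. apply rep_idem. Qed.
Lemma rp_reach x : RX X s (rp x) x.
Proof. apply rep_reach'. Qed.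

Lemma Yinf : card_le nat Y.
Proof. apply (cle_trans _ CB). apply cle_nat_CB. apply (cle_trans _ X). apply (proj1 CBX). exact XY. Qed.

Lemma Xb_count : card_le {x | Xb x} CB.
Proof.
destruct (dep_choice (fun t => {m | Mt t m} -> nat) (fun t k => fin t -> injective k)) as [K HK].
{ intro t. destruct (classic (fin t)) as [f|f].
  - destruct (comparability nat {m | Mt t m}) as [h|[k hk]]. contradiction.
    exists k. auto.
  - exists (fun _ => 0). intro; contradiction. }
apply (cle_trans _ (Code * (nat * nat))).
- apply (cle_rel (fun (x : {x | Xb x}) (p : Code * (nat * nat)) =>
     fst p = cd (rp (proj1_sig x)) /\
     exists hm : Mt (fst p) (rp (proj1_sig x)),
       fst (snd p) = K (fst p) (exist _ _ hm) /\ en X s pps (rp (proj1_sig x)) (snd (snd p)) = proj1_sig x)).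
  + intros [x hx]. simpl.
    destruct (en_surj X s pps (rp x) x (rp_reach x)) as [j hj].
    assert (hm : Mt (cd (rp x)) (rp x)) by (split; [apply rp_isrep | reflexivity]).
    exists (cd (rp x), (K _ (exist _ _ hm), j)). simpl. split; auto. exists hm. auto.
  + intros [x hx] [x' hx'] [t [i j]] [e1 [hm [e2 e3]]] [e1' [hm' [e2' e3']]]. simpl in *.
    apply sig_eq. simpl. rewrite <- e3. rewrite <- e3'.
    assert (E : exist (Mt t) (rp x) hm = exist (Mt t) (rp x') hm').
    { apply (HK t). subst t. exact hx. congruence. }
    assert (E' := f_equal (@proj1_sig _ _) E). simpl in E'. rewrite E'. reflexivity.
- apply (cle_trans _ (CB * (nat * nat))). apply cle_prod. apply cle_Code. apply cle_refl.
  apply (cle_trans _ (CB * nat)). apply cle_prod. apply cle_refl. apply cle_natnat.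
  apply cle_CBnat.
Qed.

Lemma exists_rho : exists rho, ~ card_le {m | Mt rho m} CB.
Proof.
apply NNPP. intro H.
assert (H' : forall t, card_le {m | Mt t m} CB).
{ intro t. apply NNPP. intro h. apply H. exists t. auto. }
destruct (dep_choice (fun t => {m | Mt t m} -> CB) (fun t k => injective k)) as [K HK].
{ intro t. destruct (H' t) as [k hk]. exists k. auto. }
apply (proj2 CBX).
apply (cle_trans _ (Code * (CB * nat))).
- apply (cle_rel (fun (x : X) (p : Code * (CB * nat)) =>
     fst p = cd (rp x) /\
     exists hm : Mt (fst p) (rp x),
       fst (snd p) = K (fst p) (exist _ _ hm) /\ en X s pps (rp x) (snd (snd p)) = x)).
  + intro x.
    destruct (en_surj X s pps (rp x) x (rp_reach x)) as [j hj].
    assert (hm : Mt (cd (rp x)) (rp x)) by (split; [apply rp_isrep | reflexivity]).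
    exists (cd (rp x), (K _ (exist _ _ hm), j)). simpl. split; auto. exists hm. auto.
  + intros x x' [t [i j]] [e1 [hm [e2 e3]]] [e1' [hm' [e2' e3']]]. simpl in *.
    rewrite <- e3. rewrite <- e3'.
    assert (E : exist (Mt t) (rp x) hm = exist (Mt t) (rp x') hm').
    { apply (HK t). congruence. }
    assert (E' := f_equal (@proj1_sig _ _) E). simpl in E'. rewrite E'. reflexivity.
- apply (cle_trans _ (CB * (CB * nat))). apply cle_prod. apply cle_Code. apply cle_refl.
  apply (cle_trans _ (CB * CB)). apply cle_prod. apply cle_refl. apply cle_CBnat.
  apply cle_CB2.
Qed.



Variable rho : Code.
Hypothesis Hrho : ~ card_le {m | Mt rho m} CB.

Lemma notfin_rho : ~ fin rho.
Proof.
intro f. destruct (comparability nat {m | Mt rho m}) as [h|h]. contradiction.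
apply Hrho. apply (cle_trans _ nat). exact h. apply cle_nat_CB.
Qed.

Lemma CB_le_Mrho : card_le CB {m | Mt rho m}.
Proof. destruct (comparability CB {m | Mt rho m}) as [h|h]. exact h. contradiction. Qed.

Definition WB := {x | Xb x}.
Definition sWB (n : nat) : rel WB := fun a b => s n (proj1_sig a) (proj1_sig b).
Lemma sWB_pp n : partial_perm (sWB n).
Proof.
split.
- intros a b b' h h'. apply sig_eq. apply (proj1 (pps n) (proj1_sig a)); auto.
- intros a a' b h h'. apply sig_eq. apply (proj2 (pps n) _ _ (proj1_sig b)); auto.
Qed.

Variable r0 : X.
Hypothesis Hr0 : Mt rho r0.
Variable S4 : Y -> Prop.
Hypothesis HS4 : realon A w (sZ X s Y WB sWB r0)
    (fun z => match z with inl _ => True | inr p => S4 (fst p) end).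
Hypothesis HS4c : card_le {y | S4 y} ((WB + unit) * nat).

Lemma S4_CB : card_le {y | S4 y} CB.
Proof.
apply (cle_trans _ _ _ HS4c). apply (cle_trans _ ((CB + CB) * nat)).
apply cle_prod; [|apply cle_refl]. apply cle_sum. apply Xb_count.
exists (fun _ _ => true). intros [] [] _; reflexivity.
apply (cle_trans _ (CB * nat)). apply cle_prod; [apply cle_CBsum|apply cle_refl]. apply cle_CBnat.
Qed.

Variable iota : {y | S4 y} -> {m | Mt rho m}.
Hypothesis Hiota : injective iota.

Definition Q m := isrep m /\ ~ fin (cd m) /\ ~ exists j, proj1_sig (iota j) = m.
Definition Qt (t : Code) m := Q m /\ cd m = t.

Lemma L_inf : card_le nat {m | Qt rho m}.
Proof.
destruct (comparability nat {m | Qt rho m}) as [h|h]. exact h.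
exfalso. apply Hrho.
apply (cle_trans _ ({y | S4 y} + {m | Qt rho m})).
- apply (cle_rel (fun (m : {m | Mt rho m}) (t : {y | S4 y} + {m | Qt rho m}) =>
    match t with inl j => iota j = m | inr q => proj1_sig q = proj1_sig m end)).
  + intros [m hm]. destruct (classic (exists j, proj1_sig (iota j) = m)) as [[j e]|ne].
    * exists (inl j). apply sig_eq. exact e.
    * assert (hq : Qt rho m).
      { destruct hm as [h1 h2]. split; [split; [exact h1|split; [rewrite h2; apply notfin_rho|exact ne]]|exact h2]. }
      exists (inr (exist _ m hq)). reflexivity.
  + intros a b [j|q] e e'. congruence. apply sig_eq. congruence.
- apply (cle_trans _ (CB + CB)). apply cle_sum.
  + apply S4_CB.
  + apply (cle_trans _ nat). exact h. apply cle_nat_CB.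
  + apply cle_CBsum.
Qed.

Lemma Qt_inf t m0 : Qt t m0 -> card_le nat {m | Qt t m}.
Proof.
intro hm0. destruct (classic (t = rho)) as [e|ne].
- subst. apply L_inf.
- assert (nf : ~ fin t). { destruct hm0 as [[_ [h _]] e]. rewrite <- e. exact h. }
  apply NNPP in nf. apply (cle_trans _ _ _ nf). apply cle_sub.
  intros m [h1 h2]. split; [split; [exact h1|split]|exact h2].
  + rewrite h2. intro f. apply f. exact nf.
  + intros [j ej]. apply ne. destruct (proj2_sig (iota j)) as [_ hc]. rewrite ej in hc.
    rewrite <- h2. exact hc.
Qed.

Lemma cle_empty T : card_le Empty_set T.
Proof. exists (fun e : Empty_set => match e with end). intros []. Qed.

Definition sE (n : nat) : rel Empty_set := fun _ _ => False.
Lemma sE_pp n : partial_perm (sE n).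
Proof. split; intros []. Qed.

Definition Dprop t (r : X) (S : Y -> Prop) (Bt : X -> Y -> X -> Prop) :=
  isrep r /\ cd r = t /\
  realon A w (sZ X s Y Empty_set sE r) (fun z => match z with inl _ => True | inr p => S (fst p) end) /\
  rbij (fun p : X * Y => Qt t (fst p) /\ S (snd p)) (Qt t) (fun p m => Bt (fst p) (snd p) m).

Lemma data_ex t : (exists m, Qt t m) -> exists r S Bt, Dprop t r S Bt.
Proof.
intros [m0 hm0].
destruct Yinf as [ey hey].
destruct (GL A w c Hc X s pps Y U Yinf Empty_set sE sE_pp
          (cle_empty Y)
          m0 (ey 0)) as [S [Sy0 [Sc HS]]].
assert (Scount : card_le {y | S y} nat).
{ apply (cle_trans _ _ _ Sc). apply (cle_trans _ (nat * nat)); [|apply cle_natnat].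
  apply cle_prod; [|apply cle_refl]. exists (fun _ => 0). intros [[]|[]] [[]|[]] _; reflexivity. }
assert (QI := Qt_inf t m0 hm0).
destruct (SB ({m | Qt t m} * {y | S y}) {m | Qt t m}) as [h [hi hs]].
- apply (cle_trans _ ({m | Qt t m} * nat)). apply cle_prod. apply cle_refl. exact Scount.
  apply inf_mul. exact QI.
- exists (fun q => (q, exist S (ey 0) Sy0)). intros a b e. injection e; auto.
- exists m0, S, (fun q y m => exists hq hy, proj1_sig (h (exist _ q hq, exist _ y hy)) = m).
  split; [exact (proj1 (proj1 hm0))|split; [exact (proj2 hm0)|split; [exact HS|]]].
  split; [|split; [|split; [|split]]].
  + intros [q y] m [hq [hy e]]. simpl in *. split. split; auto. rewrite <- e. exact (proj2_sig _).
  + intros [q y] [hq hy]. simpl in *. exists (proj1_sig (h (exist _ q hq, exist _ y hy))). exists hq, hy. reflexivity.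
  + intros m hm. destruct (hs (exist _ m hm)) as [[[q hq] [y hy]] e].
    exists (q, y). simpl. exists hq, hy. rewrite e. reflexivity.
  + intros [q y] m m' [hq [hy e]] [hq' [hy' e']]. simpl in *. subst.
    rewrite (proof_irrelevance _ hq hq'). rewrite (proof_irrelevance _ hy hy'). reflexivity.
  + intros [q y] [q' y'] m [hq [hy e]] [hq' [hy' e']]. simpl in *.
    assert (E : h (exist _ q hq, exist _ y hy) = h (exist _ q' hq', exist _ y' hy')).
    { apply sig_eq. transitivity m; [exact e | symmetry; exact e']. }
    apply hi in E. injection E. intros. subst. reflexivity.
Qed.

Lemma gi_rep r m u v : Giso X s pps r m u v -> isrep m -> rp v = m.
Proof. intros [i [_ e]] hm. subst v. apply (reach_rep X s); auto. apply en_in. Qed.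

Lemma gi_dom r m u v : Giso X s pps r m u v -> RX X s r u.
Proof. intros [i [e _]]. subst u. apply en_in. Qed.

Lemma code_iota j : cd r0 = cd (proj1_sig (iota j)).
Proof. rewrite (proj2 Hr0). symmetry. exact (proj2 (proj2_sig (iota j))). Qed.

Lemma Xb_rho x m : Xb x -> rp x = m -> Mt rho m -> False.
Proof. intros hx e [_ hc]. apply notfin_rho. unfold Xb in hx. rewrite e in hx. rewrite hc in hx. exact hx. Qed.

Lemma iota_rep j : isrep (proj1_sig (iota j)).
Proof. exact (proj1 (proj2_sig (iota j))). Qed.

Definition B0 x := Xb x \/ exists j, proj1_sig (iota j) = rp x.
Definition G0 (z : Zt X s Y WB r0) (x : X) : Prop :=
  match z with
  | inl a => proj1_sig a = x
  | inr p => exists hy : S4 (fst p),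
      Giso X s pps r0 (proj1_sig (iota (exist _ (fst p) hy))) (proj1_sig (snd p)) x
  end.

Lemma iota_same y hy y' hy' x x' u u' :
  Giso X s pps r0 (proj1_sig (iota (exist S4 y hy))) u x ->
  Giso X s pps r0 (proj1_sig (iota (exist S4 y' hy'))) u' x' -> rp x = rp x' -> y = y'.
Proof.
intros g g' e.
rewrite (gi_rep _ _ _ _ g (iota_rep _)) in e. rewrite (gi_rep _ _ _ _ g' (iota_rep _)) in e.
apply sig_eq in e. apply Hiota in e. exact (f_equal (@proj1_sig _ _) e).
Qed.

Lemma B0_real : realon A w s B0.
Proof.
apply (realon_transport A w (fun z : Zt X s Y WB r0 => match z with inl _ => True | inr p => S4 (fst p) end) B0 G0 (sZ X s Y WB sWB r0) s); [| |exact HS4].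
- split; [|split; [|split; [|split]]].
  + intros [a|[y cc]] x h; simpl in h.
    * subst. split; [exact I | left; exact (proj2_sig a)].
    * destruct h as [hy g]. split; [exact hy|]. right. exists (exist _ y hy). symmetry.
      apply (gi_rep _ _ _ _ g). apply iota_rep.
  + intros [a|[y cc]] hz. exists (proj1_sig a); reflexivity. simpl in hz.
    destruct (proj1 (proj2 (giso_rbij X s pps r0 _ (code_iota (exist _ y hz)))) (proj1_sig cc) (proj2_sig cc)) as [v hv].
    exists v. exists hz. exact hv.
  + intros x [hx|[[y hy] e]]. exists (inl (exist _ x hx)). reflexivity.
    assert (hm : RX X s (proj1_sig (iota (exist _ y hy))) x) by (rewrite e; apply rp_reach).
    destruct (proj1 (proj2 (proj2 (giso_rbij X s pps r0 _ (code_iota (exist _ y hy))))) x hm) as [u g].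
    exists (inr (y, exist _ u (gi_dom _ _ _ _ g))). simpl. exists hy. exact g.
  + intros [a|[y cc]] x x' h h'; simpl in *. congruence.
    destruct h as [hy g]. destruct h' as [hy' g']. rewrite (proof_irrelevance _ hy hy') in g.
    apply (proj1 (proj2 (proj2 (proj2 (giso_rbij X s pps r0 _ (code_iota (exist _ y hy'))))))
       (proj1_sig cc)); auto.
  + intros z z' x h h'. destruct z as [a|[y cc]]; destruct z' as [a'|[y' cc']]; simpl in *.
    * f_equal. apply sig_eq. congruence.
    * exfalso. destruct h' as [hy' g']. subst x.
      apply (Xb_rho _ _ (proj2_sig a) (gi_rep _ _ _ _ g' (iota_rep _)) (proj2_sig (iota _))).
    * exfalso. destruct h as [hy g]. subst x.
      apply (Xb_rho _ _ (proj2_sig a') (gi_rep _ _ _ _ g (iota_rep _)) (proj2_sig (iota _))).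
    * destruct h as [hy g]. destruct h' as [hy' g'].
      assert (ey := iota_same _ _ _ _ _ _ _ _ g g' eq_refl). subst y'.
      rewrite (proof_irrelevance _ hy' hy) in g'.
      assert (E := proj2 (proj2 (proj2 (proj2 (giso_rbij X s pps r0 _ (code_iota (exist _ y hy)))))) _ _ _ g g').
      rewrite (sig_eq _ cc cc' E). reflexivity.
- intros n z1 z2 x1 x2 h1 h2.
  destruct z1 as [a|[y cc]]; destruct z2 as [b|[y' cc']]; simpl in *.
  + unfold sWB. subst. reflexivity.
  + split; [contradiction|]. intro hs. destruct h2 as [hy g]. subst x1.
    apply (Xb_rho _ (proj1_sig (iota (exist _ y' hy))) (proj2_sig a)). unfold rp. rewrite (rep_step X s n _ _ hs). apply (gi_rep _ _ _ _ g (iota_rep _)).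
    exact (proj2_sig (iota _)).
  + split; [contradiction|]. intro hs. destruct h1 as [hy g]. subst x2.
    apply (Xb_rho _ (proj1_sig (iota (exist _ y hy))) (proj2_sig b)). unfold rp. rewrite <- (rep_step X s n _ _ hs). apply (gi_rep _ _ _ _ g (iota_rep _)).
    exact (proj2_sig (iota _)).
  + destruct h1 as [hy g1]. destruct h2 as [hy' g2]. split.
    * intros [e hs]. subst y'. rewrite (proof_irrelevance _ hy' hy) in g2.
      apply (giso_iso X s pps r0 _ n _ _ _ _ (code_iota (exist _ y hy)) g1 g2). exact hs.
    * intro hs. assert (ey := iota_same _ _ _ _ _ _ _ _ g1 g2 (rep_step X s n _ _ hs)). subst y'.
      rewrite (proof_irrelevance _ hy' hy) in g2. split; auto.
      apply (giso_iso X s pps r0 _ n _ _ _ _ (code_iota (exist _ y hy)) g1 g2). exact hs.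
Qed.

Variables (dr : Code -> X) (dS : Code -> Y -> Prop) (dB : Code -> X -> Y -> X -> Prop).
Hypothesis Hdat : forall t, (exists m, Qt t m) -> Dprop t (dr t) (dS t) (dB t).

Definition Gb q x := exists y m, dB (cd q) q y m /\ rp x = m.

Lemma Gb_real q : Q q -> realon A w s (Gb q).
Proof.
intro hq. unfold Gb. set (t := cd q).
assert (hqt : Qt t q) by (split; auto).
destruct (Hdat t (ex_intro _ q hqt)) as [hr [hc [HR [B1 [B2 [B3 [B4 B5]]]]]]].
assert (cdm : forall y m, dB t q y m -> cd (dr t) = cd m).
{ intros y m h. destruct (B1 (q,y) m h) as [_ [_ e]]. rewrite hc. symmetry; exact e. }
assert (rpm : forall y m, dB t q y m -> isrep m).
{ intros y m h. destruct (B1 (q,y) m h) as [_ [[e _] _]]. exact e. }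
apply (realon_transport A w (fun z : Zt X s Y Empty_set (dr t) => match z with inl _ => True | inr p => dS t (fst p) end)
   _ (fun z x => match z with inl e => False | inr p => dS t (fst p) /\
      exists m, dB t q (fst p) m /\ Giso X s pps (dr t) m (proj1_sig (snd p)) x end)
   (sZ X s Y Empty_set sE (dr t)) s); [| |exact HR].
- split; [|split; [|split; [|split]]].
  + intros [e|[y cc]] x h. destruct e. destruct h as [hy [m [hb g]]]. split; auto.
    exists y, m. split; auto. apply (gi_rep _ _ _ _ g). apply (rpm _ _ hb).
  + intros [e|[y cc]] hz. destruct e. simpl in hz.
    destruct (B2 (q,y) (conj hqt hz)) as [m hm]. simpl in hm.
    destruct (proj1 (proj2 (giso_rbij X s pps (dr t) m (cdm _ _ hm))) (proj1_sig cc) (proj2_sig cc)) as [v hv].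
    exists v. split; auto. exists m. auto.
  + intros x [y [m [hb e]]].
    assert (hm : RX X s m x) by (rewrite <- e; apply rp_reach).
    destruct (proj1 (proj2 (proj2 (giso_rbij X s pps (dr t) m (cdm _ _ hb)))) x hm) as [u g].
    exists (inr (y, exist _ u (gi_dom _ _ _ _ g))). simpl. split.
    exact (proj2 (proj1 (B1 (q,y) m hb))). exists m. auto.
  + intros [e|[y cc]] x x' h h'. destruct e.
    destruct h as [hy [m [hb g]]]. destruct h' as [hy' [m' [hb' g']]]. simpl in *.
    assert (m = m') by (apply (B4 (q,y)); auto). subst m'.
    apply (proj1 (proj2 (proj2 (proj2 (giso_rbij X s pps (dr t) m (cdm _ _ hb))))) (proj1_sig cc)); auto.
  + intros [e|[y cc]] [e'|[y' cc']] x h h'; try destruct e; try destruct e'.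
    destruct h as [hy [m [hb g]]]. destruct h' as [hy' [m' [hb' g']]]. simpl in *.
    assert (em : m = m').
    { rewrite <- (gi_rep _ _ _ _ g (rpm _ _ hb)). apply (gi_rep _ _ _ _ g' (rpm _ _ hb')). }
    subst m'.
    assert (ey : (q,y) = (q,y')) by (apply (B5 _ _ m); auto). injection ey; intro; subst y'.
    assert (E := proj2 (proj2 (proj2 (proj2 (giso_rbij X s pps (dr t) m (cdm _ _ hb))))) _ _ _ g g').
    rewrite (sig_eq _ cc cc' E). reflexivity.
- intros n z1 z2 x1 x2 h1 h2.
  destruct z1 as [e|[y cc]]; [destruct e|]. destruct z2 as [e|[y' cc']]; [destruct e|].
  simpl in *. destruct h1 as [hy [m [hb g1]]]. destruct h2 as [hy' [m' [hb' g2]]]. split.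
  + intros [e hs]. subst y'. assert (m = m') by (apply (B4 (q,y)); auto). subst m'.
    apply (giso_iso X s pps (dr t) m n _ _ _ _ (cdm _ _ hb) g1 g2). exact hs.
  + intro hs.
    assert (em : m = m').
    { rewrite <- (gi_rep _ _ _ _ g1 (rpm _ _ hb)). rewrite <- (gi_rep _ _ _ _ g2 (rpm _ _ hb')).
      apply (rep_step X s n _ _ hs). }
    subst m'. assert (ey : (q,y) = (q,y')) by (apply (B5 _ _ m); auto). injection ey; intro; subst y'.
    split; auto. apply (giso_iso X s pps (dr t) m n _ _ _ _ (cdm _ _ hb) g1 g2). exact hs.
Qed.

Definition Pi (i : option X) (x : X) : Prop :=
  match i with None => B0 x | Some q => Q q /\ Gb q x end.

Lemma Pi_rep i x x' : Pi i x -> rp x = rp x' -> Pi i x'.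
Proof.
intros h e. destruct i as [q|]; simpl in *.
- destruct h as [hq [y [m [hb e']]]]. split; auto. exists y, m. split; auto. congruence.
- unfold B0, Xb in *. rewrite <- e. exact h.
Qed.

Lemma Pi_disj i j x : Pi i x -> Pi j x -> i = j.
Proof.
assert (HQ : forall q y m, Q q -> dB (cd q) q y m -> Q m /\ cd m = cd q).
{ intros q y m hq hb. destruct (Hdat (cd q) (ex_intro _ q (conj hq eq_refl))) as [_ [_ [_ [B1 _]]]].
  exact (proj2 (B1 (q,y) m hb)). }
assert (NB : forall q z, Q q -> Gb q z -> B0 z -> False).
{ intros q z hq [y [m [hb e]]] hb0. destruct (HQ q y m hq hb) as [[_ [nf ni]] _].
  destruct hb0 as [h|[j0 ej]].
  - apply nf. unfold Xb in h. rewrite e in h. exact h.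
  - apply ni. exists j0. congruence. }
destruct i as [q|]; destruct j as [q'|]; simpl; intros h h'; auto.
- destruct h as [hq [y [m [hb e]]]]. destruct h' as [hq' [y' [m' [hb' e']]]].
  rewrite <- e' in hb'. rewrite e in hb'.
  destruct (HQ q y m hq hb) as [_ c1]. destruct (HQ q' y' m hq' hb') as [_ c2].
  assert (ct : cd q' = cd q) by congruence. rewrite ct in hb'.
  destruct (Hdat (cd q) (ex_intro _ q (conj hq eq_refl))) as [_ [_ [_ [_ [_ [_ [_ B5]]]]]]].
  assert (E : (q,y) = (q',y')) by (apply (B5 _ _ m); auto). injection E; intros; subst. reflexivity.
- exfalso. destruct h. apply (NB q x); auto.
- exfalso. destruct h'. apply (NB q' x); auto.
Qed.

Lemma part2_main : realon A w s (fun _ => True).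
Proof.
apply (realon_ext A w s (fun z => exists i, Pi i z)).
{ intro x. split; auto. intros _.
  destruct (classic (Xb x)) as [hx|hx]. exists None. left. exact hx.
  destruct (classic (exists j, proj1_sig (iota j) = rp x)) as [hj|hj]. exists None. right. exact hj.
  assert (hq : Q (rp x)) by (split; [apply rp_isrep | split; auto]).
  set (t := cd (rp x)).
  destruct (Hdat t (ex_intro _ (rp x) (conj hq eq_refl))) as [_ [_ [_ [B1 [_ [B3 _]]]]]].
  destruct (B3 (rp x) (conj hq eq_refl)) as [[q y] hb]. simpl in hb.
  destruct (B1 (q,y) (rp x) hb) as [[[hq' ct] _] _]. simpl in hq', ct.
  exists (Some q). simpl. split; auto. exists y, (rp x). split; auto. rewrite ct. exact hb. }
apply realon_union.
- apply Pi_disj.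
- intros [q|]; simpl.
  + destruct (classic (Q q)) as [hq|hq].
    * apply (realon_ext A w s (Gb q)). intro z; split. intro h0; split; auto. intros [_ h0]; auto.
      apply Gb_real; auto.
    * apply (realon_ext A w s (fun _ => False)). intro z; split. intro h0; contradiction.
      intros [h0 _]; contradiction.
      apply realon_empty.
  + apply B0_real.
- intros n i j x y hi hj hs. apply (Pi_disj i j y); auto. apply (Pi_rep i x); auto.
  apply (rep_step X s n _ _ hs).
Qed.

End Part2.

Lemma part_ii (A : Type) (w : nat -> word A) X Y :
  countable A -> card_lt CB X -> card_le X Y -> universal Y A w -> universal X A w.
Proof.
intros [c Hc] CBX XY U s pps. apply realon_global.
destruct (exists_rho X s pps CBX) as [rho Hrho].
destruct (CB_le_Mrho X s pps rho Hrho) as [k hk].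
set (r0 := proj1_sig (k (fun _ => true))).
assert (Hr0 : Mt X s pps rho r0) by exact (proj2_sig (k (fun _ => true))).
assert (YI := Yinf X Y CBX XY).
destruct YI as [ey hey].
assert (WY : card_le (WB X s pps) Y).
{ apply (cle_trans _ X). apply cle_sig. exact XY. }
destruct (GL A w c Hc X s pps Y U (Yinf X Y CBX XY) (WB X s pps) (sWB X s pps) (sWB_pp X s pps)
   WY r0 (ey 0)) as [S4 [_ [HS4c HS4]]].
destruct (cle_trans _ _ _ (S4_CB X s pps Y S4 HS4c) (CB_le_Mrho X s pps rho Hrho)) as [iota Hiota].
destruct (choice_fun (fun t (d : X * (Y -> Prop) * (X -> Y -> X -> Prop)) =>
   (exists m, Qt X s pps Y rho S4 iota t m) ->
   Dprop A w X s pps Y rho S4 iota t (fst (fst d)) (snd (fst d)) (snd d))) as [D HD].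
{ intro t. destruct (classic (exists m, Qt X s pps Y rho S4 iota t m)) as [h|h].
  - destruct (data_ex A w c Hc X s pps Y U CBX XY rho Hrho S4 HS4c iota t h) as [r [S [Bt HB]]].
    exists (r, S, Bt). intros _. exact HB.
  - exists (r0, fun _ => True, fun _ _ _ => True). intro; contradiction. }
apply (part2_main A w X s pps Y rho Hrho r0 Hr0 S4 HS4 iota Hiota
   (fun t => fst (fst (D t))) (fun t => snd (fst (D t))) (fun t => snd (D t)) HD).
Qed.

Theorem corollary2p3 :
  (forall X Y : Type, infinite X -> infinite Y -> card_lt X Y ->
     (forall (A : Type) (w : nat -> word A), countable A ->
        universal X A w -> universal Y A w) /\
     (card_lt (nat -> bool) X ->
        forall (A : Type) (w : nat -> word A), countable A ->
          universal Y A w -> universal X A w)) /\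
  (forall X Y : Type, card_lt (nat -> bool) X -> card_le X Y ->
     forall (A : Type) (w : nat -> word A), countable A ->
       (universal X A w <-> universal Y A w)).
Proof.
split.
- intros X Y hX hY hlt. split.
  + intros A w _ U. apply (part_i A w X Y hX (proj1 hlt) U).
  + intros hCB A w hA U. apply (part_ii A w X Y hA hCB (proj1 hlt) U).
- intros X Y hCB hXY A w hA. split.
  + intro U. apply (part_i A w X Y); auto.
    apply (cle_trans _ CB). apply cle_nat_CB. exact (proj1 hCB).
  + intro U. apply (part_ii A w X Y hA hCB hXY U).
Qed.
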